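(* Let $\Sigma$ be a finite alphabet, $\Omega$ a distribution of $\Sigma$ and $\mathsf{Obs}$ an observation function over $\Sigma$. Then $\Omega\models\mathsf{Obs}$ if and only if for every $\sigma\in\mathsf{Dom}(\mathsf{Obs})$, \[\mathsf{Obs}(\sigma)=\bigwedge_{\Sigma_i\in\Omega}\mathsf{Obs}_{\Sigma_i}(\sigma|_{\Sigma_i}),\] where $+$ is read as true and $-$ as false.
   Context: The projection $\sigma|_{\Sigma'}$ of a word $\sigma$ onto $\Sigma'\subseteq\Sigma$ is the subsequence of symbols of $\sigma$ lying in $\Sigma'$; for sets, $S|_{\Sigma'}=\{\sigma|_{\Sigma'}\mid\sigma\in S\}$. For languages $\mathcal L_i\subseteq\Sigma_i^\star$, $\|_{i=1}^n(\mathcal L_i,\Sigma_i)=\{\sigma\in(\bigcup_i\Sigma_i)^\star\mid\forall i.\ \sigma|_{\Sigma_i}\in\mathcal L_i\}$. A distribution of $\Sigma$ is a finite set $\Omega=\{\Sigma_1,\dots,\Sigma_n\}$ of subsets of $\Sigma$ with $\bigcup_i\Sigma_i=\Sigma$. A language $\mathcal L\subseteq\Sigma^\star$ is a product language over $\Omega$, written $\Omega\models\mathcal L$, if there are $\mathcal L_i\subseteq\Sigma_i^\star$ with $\mathcal L=\|_{i=1}^n(\mathcal L_i,\Sigma_i)$. An observation function over $\Sigma$ is a partial function $\mathsf{Obs}:\Sigma^\star\rightharpoonup\{+,-\}$ with finite domain $\mathsf{Dom}(\mathsf{Obs})$. A language $\mathcal L$ agrees with $\mathsf{Obs}$, written $\mathcal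 L\models\mathsf{Obs}$, if for all $\sigma\in\mathsf{Dom}(\mathsf{Obs})$: $\sigma\in\mathcal L\iff\mathsf{Obs}(\sigma)=+$. We write $\Omega\models\mathsf{Obs}$ if there exists $\mathcal L$ with $\Omega\models\mathcal L$ and $\mathcal L\models\mathsf{Obs}$. For $\Sigma'\subseteq\Sigma$, the local observation function $\mathsf{Obs}_{\Sigma'}$ has domain $\mathsf{Dom}(\mathsf{Obs})|_{\Sigma'}$ and, for $\sigma'$ in it, $\mathsf{Obs}_{\Sigma'}(\sigma')=+$ iff there is $\sigma\in\mathsf{Dom}(\mathsf{Obs})$ with $\sigma|_{\Sigma'}=\sigma'$ and $\mathsf{Obs}(\sigma)=+$, and $\mathsf{Obs}_{\Sigma'}(\sigma')=-$ otherwise. *)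

(* Defs.v *)
From mathcomp Require Import all_boot.
From mathcomp Require Import finmap.
Set Implicit Arguments. Unset Strict Implicit. Unset Printing Implicit Defensive.
Local Open Scope fmap_scope.

Section Defs.
Variable Sigma : finType.

Definition proj (S : {set Sigma}) (w : seq Sigma) : seq Sigma :=
  [seq a <- w | a \in S].

Definition is_distribution (Omega : {set {set Sigma}}) : Prop :=
  \bigcup_(S in Omega) S = [set: Sigma].

Definition product_language (Omega : {set {set Sigma}}) (L : seq Sigma -> Prop) : Prop :=
  exists Li : {set Sigma} -> seq Sigma -> Prop,
    (forall S w, S \in Omega -> Li S w -> all (fun a => a \in S) w) /\
    (forall w, L w <-> (forall S, S \in Omega -> Li S (proj S w))).

(* Observation function: finite partial map from words to {+,-} = {true,false} *)
Definition obs_fun := {fmap seq Sigma -> bool}.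

Definition agrees (L : seq Sigma -> Prop) (Obs : obs_fun) : Prop :=
  forall w b, Obs.[? w] = Some b -> (L w <-> b = true).

Definition dist_models_obs (Omega : {set {set Sigma}}) (Obs : obs_fun) : Prop :=
  exists L, product_language Omega L /\ agrees L Obs.

(* local observation function Obs_{S}: partial, with domain Dom(Obs)|_S *)
Definition local_obs (Obs : obs_fun) (S : {set Sigma}) (w : seq Sigma) : option bool :=
  if has (fun x : seq Sigma => proj S x == w) (domf Obs)
  then Some (has (fun x : seq Sigma => (proj S x == w) && (Obs.[? x] == Some true)) (domf Obs))
  else None.

End Defs.

(* Main.v *)
Require Import Defs.
From mathcomp Require Import all_boot.
From mathcomp Require Import finmap.
Local Open Scope fmap_scope.

Lemma local_obsP (Sigma : finType) (Obs : obs_fun Sigma) S u :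
  local_obs Obs S u = Some true <->
  exists x, proj S x = u /\ Obs.[? x] = Some true.
Proof.
rewrite /local_obs; split.
- case: ifP => // _ [] /hasP [x _ /andP [/eqP H1 /eqP H2]].
  by exists x.
- move=> [x [H1 H2]].
  have xin : x \in domf Obs by rewrite -fndSome H2.
  have -> : has (fun x0 : seq Sigma => proj S x0 == u) (domf Obs).
    by apply/hasP; exists x => //; apply/eqP.
  congr Some; apply/hasP; exists x => //; by rewrite H1 H2 !eqxx.
Qed.

Lemma proj_all (Sigma : finType) (S : {set Sigma}) x :
  all (fun a => a \in S) (proj S x).
Proof. by rewrite /proj; apply/allP => a; rewrite mem_filter => /andP []. Qed.

Theorem mainTheorem3 (Sigma : finType) (Omega : {set {set Sigma}})
  (Obs : obs_fun Sigma) :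
  is_distribution Omega ->
  (dist_models_obs Omega Obs <->
   (forall (w : seq Sigma) (b : bool), Obs.[? w] = Some b ->
      (b = true <-> (forall S, S \in Omega -> local_obs Obs S (proj S w) = Some true)))).
Proof.
move=> _; split.
- move=> [L [[Li [Hall HL]] Hag]] w b Hw; split.
  + move=> Hb S _; apply/local_obsP; exists w; split => //; by rewrite Hw Hb.
  + move=> H; apply/(Hag w b Hw); apply/HL => S HS.
    have [x [Hx1 Hx2]] := proj1 (local_obsP _ _ _ _) (H S HS).
    have Lx : L x by apply/(Hag x true Hx2).
    by rewrite -Hx1; apply: (proj1 (HL x) Lx).
- move=> H.
  exists (fun w => forall S, S \in Omega -> local_obs Obs S (proj S w) = Some true).
  split.
  + exists (fun S u => local_obs Obs S u = Some true); split => //.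
    move=> S w _ /local_obsP [x [<- _]]; exact: proj_all.
  + move=> w b Hw; split; [by move/(H w b Hw) | by move/(H w b Hw)].
Qed.
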